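(* Let $s\in[-\infty,0]$, let $\rho$ be a $2\times2$ density matrix and $X,Y$ be $2\times2$ Hermitian matrices. Define $\mathcal{I}_\rho^s(X,Y)=I^s(\rho,X)I^s(\rho,Y)-\frac1{16}\left[I^s(\rho,X+Y)-I^s(\rho,X-Y)\right]^2.$ Then $0\le\mathcal{I}_\rho^s(X,Y)\le\frac14\left|\mathrm{Tr}\big[\rho[X,Y]\big]\right|^2$.
   Context: Write $\rho=\sum_{i=1}^2\lambda_i|\psi_i\rangle\langle\psi_i|$ (orthonormal eigenbasis, $\lambda_1\ge\lambda_2\ge0$). For $-\infty<s<0$ and $a_1,a_2>0$ let $m_s(a_1,a_2)=\left(\frac{a_1^s+a_2^s}{2}\right)^{1/s}$; $m_0(a_1,a_2)=\sqrt{a_1a_2}$; $m_{-\infty}(a_1,a_2)=\min\{a_1,a_2\}$; and $m_s(a,0)=m_s(0,a)=m_s(0,0)=0$. Define $\zeta_\rho^s(X,Y)=\mathrm{Tr}[\rho X^\dagger Y]-\sum_{i,j} m_s(\lambda_i,\lambda_j)\langle\psi_i|X^\dagger|\psi_j\rangle\langle\psi_j|Y|\psi_i\rangle$ and $I^s(\rho,X)=\zeta_\rho^s(X,X)$. $[X,Y]=XY-YX$. *)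

(* Defs.v *)
From HB Require Import structures.
From mathcomp Require Import all_boot all_order all_algebra.
From mathcomp Require Import all_classical all_reals all_analysis.
From mathcomp Require Import complex.
Set Implicit Arguments. Unset Strict Implicit. Unset Printing Implicit Defensive.
Import Order.TTheory GRing.Theory Num.Theory.
Local Open Scope ring_scope.

Definition adj (R : rcfType) (m n : nat) (A : 'M[R[i]]_(m, n)) : 'M[R[i]]_(n, m) :=
  (map_mx (fun z => z^*) A)^T.

(* the mean m_s(a1,a2), s in [-oo,0]; m_s(a,0)=m_s(0,a)=m_s(0,0)=0.
   (The +oo branch is never used: s <= 0 is assumed.) *)
Definition mean_s (R : realType) (s : \bar R) (a1 a2 : R) : R :=
  if (a1 == 0) || (a2 == 0) then 0 else
  match s with
  | -oo%E => Num.min a1 a2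
  | (t%:E)%E => if t == 0 then Num.sqrt (a1 * a2)
                else powR ((powR a1 t + powR a2 t) / 2) t^-1
  | +oo%E => 0
  end.

(* zeta_rho^s(X,Y) computed from the spectral decomposition
   rho = sum_i lam i |psi i><psi i| *)
Definition zeta (R : realType) (s : \bar R) (rho : 'M[R[i]]_2)
  (lam : 'I_2 -> R) (psi : 'I_2 -> 'cV[R[i]]_2) (X Y : 'M[R[i]]_2) : R[i] :=
  \tr (rho *m adj X *m Y)
  - \sum_(i < 2) \sum_(j < 2)
      ((mean_s s (lam i) (lam j))%:C)%C
      * (adj (psi i) *m adj X *m psi j) 0 0
      * (adj (psi j) *m Y *m psi i) 0 0.

Definition Is (R : realType) (s : \bar R) (rho : 'M[R[i]]_2)
  (lam : 'I_2 -> R) (psi : 'I_2 -> 'cV[R[i]]_2) (X : 'M[R[i]]_2) : R[i] :=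
  zeta s rho lam psi X X.

Definition calI (R : realType) (s : \bar R) (rho : 'M[R[i]]_2)
  (lam : 'I_2 -> R) (psi : 'I_2 -> 'cV[R[i]]_2) (X Y : 'M[R[i]]_2) : R[i] :=
  Is s rho lam psi X * Is s rho lam psi Y
  - 16^-1 * (Is s rho lam psi (X + Y) - Is s rho lam psi (X - Y)) ^+ 2.

Definition is_hermitian (R : rcfType) (n : nat) (A : 'M[R[i]]_n) : Prop := adj A = A.

Definition density_matrix (R : rcfType) (n : nat) (A : 'M[R[i]]_n) : Prop :=
  [/\ is_hermitian A, (forall v : 'cV[R[i]]_n, 0 <= (adj v *m A *m v) 0 0)
    & \tr A = 1].

(* Main.v *)
Require Import Defs.
From HB Require Import structures.
From mathcomp Require Import all_boot all_order all_algebra.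
From mathcomp Require Import all_classical all_reals all_analysis.
From mathcomp Require Import complex.
From mathcomp Require Import lra ring.
Import Order.TTheory GRing.Theory Num.Theory.
Local Open Scope ring_scope.

Section Adj.
Variable R : realType.
Implicit Types (m n p : nat).

Lemma adj_mul m n p (A : 'M[R[i]]_(m, n)) (B : 'M[R[i]]_(n, p)) :
  adj (A *m B) = adj B *m adj A.
Proof.
apply/matrixP => a b; rewrite !mxE rmorph_sum; apply: eq_bigr => k _.
by rewrite !mxE rmorphM mulrC.
Qed.

Lemma adjK m n (A : 'M[R[i]]_(m, n)) : adj (adj A) = A.
Proof. by apply/matrixP => a b; rewrite !mxE conjCK. Qed.

Lemma adjD m n (A B : 'M[R[i]]_(m, n)) : adj (A + B) = adj A + adj B.
Proof. by apply/matrixP => a b; rewrite !mxE rmorphD. Qed.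

Lemma adjB m n (A B : 'M[R[i]]_(m, n)) : adj (A - B) = adj A - adj B.
Proof. by apply/matrixP => a b; rewrite !mxE rmorphB. Qed.

Lemma mx11_mul n (A : 'M[R[i]]_(1, n)) (B : 'M[R[i]]_(n, 1)) (C : 'M[R[i]]_(1,1)) :
  (A *m B *m C) 0 0 = (A *m B) 0 0 * C 0 0.
Proof. by rewrite mxE big_ord1. Qed.

Lemma adj00 (A : 'M[R[i]]_(1,1)) : (adj A) 0 0 = (A 0 0)^*.
Proof. by rewrite !mxE. Qed.
End Adj.

Lemma mean_bnd (R : realType) (s : \bar R) (a b : R) : (s <= 0)%E ->
  0 <= b -> b <= a -> b <= mean_s s a b <= a.
Proof.
move=> hs b0 ba; rewrite /mean_s; case: ifP => [/orP H|/norP [a0 b0']].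
  case: H => /eqP E; subst; apply/andP; split; lra.
have ap : 0 < a by rewrite lt_def a0 (le_trans b0 ba).
have bp : 0 < b by rewrite lt_def b0' b0.
case: s hs => [t| |] hs //.
  case: eqP => t0.
    have h1 : Num.sqrt (b ^+ 2) <= Num.sqrt (a * b).
      rewrite ler_sqrt; last by rewrite mulr_ge0 // ltW.
      rewrite expr2; nra.
    have h2 : Num.sqrt (a * b) <= Num.sqrt (a ^+ 2).
      rewrite ler_sqrt; last by rewrite sqr_ge0.
      rewrite expr2; nra.
    rewrite sqrtr_sqr ger0_norm // in h1.
    rewrite sqrtr_sqr (ger0_norm (ltW ap)) in h2.
    by rewrite h1 h2.
  have tn : t < 0. rewrite lt_def; apply/andP; split. by rewrite eq_sym; apply/eqP. by move: hs; rewrite lee_fin.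
  have tin : t^-1 < 0 by rewrite invr_lt0.
  have lnab : ln b <= ln a by rewrite ler_ln // posrE.
  set M := (a `^ t + b `^ t) / 2.
  have Mp : 0 < M by rewrite divr_gt0 // addr_gt0 // powR_gt0.
  have hM1 : a `^ t <= M.
    rewrite /M ler_pdivlMr // mulr_natr mulr2n lerD2l.
    rewrite /powR (negbTE a0) (negbTE b0') ler_expR.
    by rewrite ler_nM2l.
  have hM2 : M <= b `^ t.
    rewrite /M ler_pdivrMr // mulr_natr mulr2n lerD2r.
    rewrite /powR (negbTE a0) (negbTE b0') ler_expR.
    by rewrite ler_nM2l.
  have l1 : t * ln a <= ln M.
    by rewrite -ln_powR ler_ln // posrE powR_gt0.
  have l2 : ln M <= t * ln b.
    by rewrite -ln_powR ler_ln // posrE powR_gt0.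
  rewrite /powR (gt_eqF Mp).
  apply/andP; split.
    rewrite -{1}(lnK (x:=b)) ?posrE // ler_expR.
    rewrite -(ler_nM2l tn) mulrA mulfV ?(lt_eqF tn) // mul1r //.
  rewrite -[X in _ <= X](lnK (x:=a)) ?posrE // ler_expR.
  rewrite -(ler_nM2l tn) mulrA mulfV ?(lt_eqF tn) // mul1r //.
apply/andP; split; rewrite minEle; case: ifP => //; lra.
Qed.

Arguments mean_bnd {R s a b}.
Lemma mean_diag (R : realType) (s : \bar R) (a : R) : (s <= 0)%E -> 0 <= a ->
  mean_s s a a = a.
Proof.
move=> hs a0; have /andP[h1 h2] := mean_bnd hs a0 (lexx a).
by apply/le_anti; rewrite h1 h2.
Qed.

Arguments mean_diag {R s a}.
Lemma mean_sym (R : realType) (s : \bar R) (a b : R) : mean_s s a b = mean_s s b a.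
Proof.
rewrite /mean_s orbC; case: ifP => _; first by [].
case: s => [t| |].
- rewrite (mulrC a b) (addrC (powR a t)). reflexivity.
- reflexivity.
- by rewrite minC.
Qed.
Section Main.
Variables (R : realType) (psi : 'I_2 -> 'cV[R[i]]_2).
Hypothesis hpsi : forall i j : 'I_2, (adj (psi i) *m psi j) 0 0 = (i == j)%:R.

Definition e (i j : 'I_2) (Z : 'M[R[i]]_2) := (adj (psi i) *m Z *m psi j) 0 0.

Lemma complete : \sum_(j < 2) psi j *m adj (psi j) = 1%:M.
Proof.
pose U : 'M[R[i]]_2 := \matrix_(a, j) psi j a 0.
have h : adj U *m U = 1%:M.
  apply/matrixP => a b; rewrite !mxE -hpsi mxE.
  by apply: eq_bigr => k _; rewrite !mxE.
have := mulmx1C h => h2.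
rewrite -h2; apply/matrixP => a b; rewrite summxE mxE.
by apply: eq_bigr => k _; rewrite !mxE big_ord1 !mxE.
Qed.

Lemma e_herm i j Z : adj Z = Z -> e j i Z = (e i j Z)^*.
Proof.
move=> hZ; rewrite /e -adj00.
rewrite !adj_mul adjK hZ mulmxA //.
Qed.

Lemma eD i j Z W : e i j (Z + W) = e i j Z + e i j W.
Proof. by rewrite /e mulmxDr mulmxDl mxE. Qed.
Lemma eB i j Z W : e i j (Z - W) = e i j Z - e i j W.
Proof. by rewrite /e mulmxBr mulmxBl !mxE. Qed.

Lemma trE (lam : 'I_2 -> R) Z W :
  \tr ((\sum_(i < 2) ((lam i)%:C)%C *: (psi i *m adj (psi i))) *m Z *m W)
  = \sum_(i < 2) ((lam i)%:C)%C * \sum_(j < 2) e i j Z * e j i W.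
Proof.
rewrite !mulmx_suml (big_morph mxtrace (@mxtraceD _ _) (mxtrace0 _ _)); apply: eq_bigr => i _.
rewrite -!scalemxAl mxtraceZ; congr (_ * _).
rewrite -!mulmxA mxtrace_mulC /mxtrace big_ord1.
rewrite {1}(_ : W = (\sum_(j < 2) psi j *m adj (psi j)) *m W); last by rewrite complete mul1mx.
rewrite !mulmx_suml !mulmx_sumr mulmx_suml summxE.
apply: eq_bigr => j _.
rewrite /e !mulmxA -(mulmxA _ (adj (psi j))) -(mulmxA _ (adj (psi j) *m W)) mxE big_ord1 //.
Qed.

Lemma IsE (s : \bar R) (lam : 'I_2 -> R) Z : adj Z = Z ->
  Is s (\sum_(i < 2) ((lam i)%:C)%C *: (psi i *m adj (psi i))) lam psi Z =
  \sum_(i < 2) \sum_(j < 2) (((lam i)%:C)%C - ((mean_s s (lam i) (lam j))%:C)%C)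
     * e i j Z * e j i Z.
Proof.
move=> hZ; rewrite /Is /zeta hZ trE.
rewrite -/(e _ _ _) /e.
rewrite !big_ord_recl !big_ord0.
ring.
Qed.
End Main.


Section M2.
Variables (R : realType) (psi : 'I_2 -> 'cV[R[i]]_2).
Hypothesis hpsi : forall i j : 'I_2, (adj (psi i) *m psi j) 0 0 = (i == j)%:R.
Variables (s : \bar R) (lam : 'I_2 -> R).
Hypothesis hs : (s <= 0)%E.
Hypothesis hlam : lam ord_max <= lam ord0.
Hypothesis hlam0 : 0 <= lam ord_max.

Lemma sum2 (F : 'I_2 -> R[i]) : \sum_(i < 2) F i = F ord0 + F ord_max.
Proof.
rewrite big_ord_recl big_ord1; congr (_ + F _); exact/val_inj.
Qed.

Lemma IsC Z : adj Z = Z ->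
  Is s (\sum_(i < 2) ((lam i)%:C)%C *: (psi i *m adj (psi i))) lam psi Z =
  (((lam ord0)%:C)%C + ((lam ord_max)%:C)%C
     - 2 * ((mean_s s (lam ord0) (lam ord_max))%:C)%C)
  * (e R psi ord0 ord_max Z * (e R psi ord0 ord_max Z)^*).
Proof.
move=> hZ; rewrite (IsE _ _ hpsi _ _ _ hZ).
rewrite !sum2.
rewrite (e_herm _ psi ord0 ord_max _ hZ).
have l0p : 0 <= lam ord0 by apply: le_trans hlam.
rewrite (mean_diag hs l0p) (mean_diag hs hlam0) (mean_sym _ s (lam ord_max)).
ring.
Qed.

Lemma trC X Y : adj X = X -> adj Y = Y ->
  \tr ((\sum_(i < 2) ((lam i)%:C)%C *: (psi i *m adj (psi i))) *m X *m Y)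
  - \tr ((\sum_(i < 2) ((lam i)%:C)%C *: (psi i *m adj (psi i))) *m Y *m X)
  = (((lam ord0)%:C)%C - ((lam ord_max)%:C)%C) *
    (e R psi ord0 ord_max X * (e R psi ord0 ord_max Y)^*
     - (e R psi ord0 ord_max X)^* * e R psi ord0 ord_max Y).
Proof.
move=> hX hY; rewrite !(trE _ _ hpsi).
rewrite !sum2.
rewrite (e_herm _ psi ord0 ord_max _ hX) (e_herm _ psi ord0 ord_max _ hY).
ring.
Qed.
End M2.



Section CJ.
Variable R : realType.
Lemma cjD (a b : R[i]) : (a + b)^* = a^* + b^*. Proof. exact: rmorphD. Qed.
Lemma cjB (a b : R[i]) : (a - b)^* = a^* - b^*. Proof. exact: rmorphB. Qed.
Lemma cjM (a b : R[i]) : (a * b)^* = a^* * b^*. Proof. exact: rmorphM. Qed.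
End CJ.

Lemma final (R : realType) (l0 l1 m : R) (x y : R[i]) :
  l1 <= m -> m <= l0 ->
  let c := ((l0%:C)%C + (l1%:C)%C - 2 * (m%:C)%C) in
  0 <= c * (x * x^*) * (c * (y * y^*)) -
      16^-1 * (c * ((x + y) * (x + y)^*) - c * ((x - y) * (x - y)^*)) ^+ 2 /\
  c * (x * x^*) * (c * (y * y^*)) -
      16^-1 * (c * ((x + y) * (x + y)^*) - c * ((x - y) * (x - y)^*)) ^+ 2
  <= 4^-1 * `|((l0%:C)%C - (l1%:C)%C) * (x * y^* - x^* * y)| ^+ 2.
Proof.
move=> m1 m2 c.
set w := x * y^* - x^* * y.
have key : c * (x * x^*) * (c * (y * y^*)) -
      16^-1 * (c * ((x + y) * (x + y)^*) - c * ((x - y) * (x - y)^*)) ^+ 2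
      = c ^+ 2 * (w * w^*) / 4.
  rewrite /w !cjB !cjD !cjM !conjCK.
  field.
  by [].
rewrite key.
have -> : c = ((l0 + l1 - 2 * m)%:C)%C by rewrite /c rmorphB rmorphD rmorphM rmorph_nat.
have -> : (l0%:C)%C - (l1%:C)%C = ((l0 - l1)%:C)%C by rewrite rmorphB.
rewrite normrM exprMn !normCK.
have cr : forall a : R, ((a%:C)%C)^* = (a%:C)%C.
  by move=> a; apply: conj_Creal; apply/complex_realP; exists a.
rewrite cr -!expr2 -!rmorphXn.
have n0 := mul_conjC_ge0 w.
split.
  apply: mulr_ge0; last by rewrite invr_ge0 ler0n.
  by apply: mulr_ge0 => //; rewrite ler0c sqr_ge0.
rewrite [X in _ <= X]mulrC.
apply: ler_wpM2r; first by rewrite invr_ge0 ler0n.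
apply: ler_wpM2r => //.
rewrite lecR; nra.
Qed.

Theorem corollary1 (R : realType) (s : \bar R) (hs : (s <= 0)%E)
  (rho X Y : 'M[R[i]]_2) (lam : 'I_2 -> R) (psi : 'I_2 -> 'cV[R[i]]_2)
  (hrho : density_matrix rho)
  (hpsi : forall i j : 'I_2, (adj (psi i) *m psi j) 0 0 = (i == j)%:R)
  (hlam : lam ord_max <= lam ord0) (hlam0 : 0 <= lam ord_max)
  (hdec : rho = \sum_(i < 2) ((lam i)%:C)%C *: (psi i *m adj (psi i)))
  (hX : is_hermitian X) (hY : is_hermitian Y) :
  0 <= calI s rho lam psi X Y /\
  calI s rho lam psi X Y
    <= 4^-1 * `| \tr (rho *m (X *m Y - Y *m X)) | ^+ 2.
Proof.
have hXY : adj (X + Y) = X + Y by rewrite adjD hX hY.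
have hXmY : adj (X - Y) = X - Y by rewrite adjB hX hY.
have htr : \tr (rho *m (X *m Y - Y *m X)) =
    \tr (rho *m X *m Y) - \tr (rho *m Y *m X).
  by rewrite mulmxBr !mulmxA (raddfB (@mxtrace _ 2)).
rewrite htr /calI; subst rho.
rewrite (@trC R psi hpsi lam X Y hX hY).
rewrite (@IsC R psi hpsi s lam hs hlam hlam0 X hX) (@IsC R psi hpsi s lam hs hlam hlam0 Y hY)
  (@IsC R psi hpsi s lam hs hlam hlam0 _ hXY) (@IsC R psi hpsi s lam hs hlam hlam0 _ hXmY).
rewrite !eB !eD.
have /andP[m1 m2] := mean_bnd hs hlam0 hlam.
exact: (final _ _ _ _ (e R psi ord0 ord_max X) (e R psi ord0 ord_max Y) m1 m2).
Qed.
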